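(* Let $S$ be an $E$-unitary inverse semigroup, $\theta=(\{X_s\}_{s\in S},\{\theta_s\}_{s\in S})$ a topological partial action of $S$ on a topological space $X$, and $\widetilde\theta=(\{X_\gamma\}_{\gamma\in\mathbf{G}(S)},\{\widetilde\theta_\gamma\}_{\gamma\in\mathbf{G}(S)})$ the unique partial action of $\mathbf{G}(S)$ on $X$ with $X_\gamma=\bigcup_{[s]=\gamma}X_s$ and $\widetilde\theta_{[s]}(x)=\theta_s(x)$ for all $s\in S$, $x\in X_{s^*}$. Then $\theta$ is topologically principal if and only if $\widetilde\theta$ is topologically principal.
   Context: Inverse semigroups: $E(S)$ idempotents, $s\le t$ iff $s=ts^*s$; $S$ is $E$-unitary if $e\le s$ with $e\in E(S)$ implies $s\in E(S)$. $\mathbf{G}(S)=S/\!\sim$, $s\sim t$ iff some $u$ has $u\le s,t$; $[s]$ the class of $s$. A topological partial action of an inverse semigroup (in particular of a group) on $X$: open $X_s$, homeomorphisms $\theta_s:X_{s^*}\to X_s$ with $s\mapsto\theta_s$ a partial homomorphism into the inverse semigroup of partial bijections of $X$, and $X=\bigcup_{e\in E(S)}X_e$. With $S_x=\{s:x\in X_{s^*}\}$, $\Lambda(\theta)$ is the set of $x$ such that every $s\in S_x$ with $\theta_s(x)=x$ admits $e\in E(S)\cap S_x$, $e\le s$; topologically principal means $\Lambda(\theta)$ dense in $X$. For a group the only idempotent is the identity, so this says $\theta_g(x)=x$ forces $g=1$. *)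

(* Defs.v *)
From HB Require Import structures.
From mathcomp Require Import all_boot.
From mathcomp Require Import boolp classical_sets topology.
From Stdlib Require Import ClassicalEpsilon.

Set Implicit Arguments.
Unset Strict Implicit.
Unset Printing Implicit Defensive.
Local Open Scope classical_set_scope.

Record isg := ISG { isg_car :> Type; smul : isg_car -> isg_car -> isg_car;
                    sstar : isg_car -> isg_car }.

Section InvSemigroup.
Variable S : isg.

Definition idem (e : S) : Prop := smul e e = e.

(* S is an inverse semigroup with s^* the inverse of s: associativity,
   regularity via s^*, and commuting idempotents (the standard
   characterisation; then s^* is the unique inverse of s). *)
Definition is_inverse_semigroup : Prop :=
  (forall a b c : S, smul a (smul b c) = smul (smul a b) c) /\
  (forall s : S, smul (smul s (sstar s)) s = s) /\
  (forall s : S, smul (smul (sstar s) s) (sstar s) = sstar s) /\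
  (forall e f : S, idem e -> idem f -> smul e f = smul f e).

Definition sleq (s t : S) : Prop := s = smul t (smul (sstar s) s).

Definition E_unitary : Prop :=
  forall e s : S, idem e -> sleq e s -> idem s.

Definition ssim (s t : S) : Prop := exists u, sleq u s /\ sleq u t.

End InvSemigroup.

Section MaxGroupImage.
Variable S : isg.

Definition GS_car := {A : set S | exists s : S, A = ssim s}.

Definition cls (s : S) : GS_car := exist _ (ssim s) (ex_intro _ s erefl).

Definition rep (A : GS_car) : S :=
  proj1_sig (constructive_indefinite_description _ (proj2_sig A)).

Definition GS : isg :=
  @ISG GS_car (fun A B => cls (smul (rep A) (rep B))) (fun A => cls (sstar (rep A))).

End MaxGroupImage.

(* A (candidate) partial action of S on X: domains X_s and maps theta_s,
   theta_s being meaningful on X_{s^*}. *)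
Record partial_action (S : isg) (X : topologicalType) := PA {
  pdom : S -> set X;
  pact : S -> X -> X }.

Section PartialAction.
Variables (S : isg) (X : topologicalType) (th : partial_action S X).

Local Notation Xd := (pdom th).
Local Notation t := (pact th).

(* Topological partial action:
   - each X_s is open;
   - theta_s : X_{s^*} -> X_s is a homeomorphism with inverse theta_{s^*};
   - s |-> theta_s is a partial homomorphism into I(X):
       theta_{s^*} = theta_s^{-1} and theta_s o theta_t <= theta_{st};
   - X = U_{e in E(S)} X_e. *)
Definition is_top_partial_action : Prop :=
  (forall s, open (Xd s)) /\
  (forall s x, Xd (sstar s) x -> Xd s (t s x)) /\
  (forall s, {within Xd (sstar s), continuous (t s)}) /\
  (forall s, Xd (sstar (sstar s)) = Xd s) /\
  (forall s x, Xd (sstar s) x -> t (sstar s) (t s x) = x) /\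
  (forall s x, Xd s x -> t s (t (sstar s) x) = x) /\
  (forall s u x, Xd (sstar u) x -> Xd (sstar s) (t u x) ->
       Xd (sstar (smul s u)) x /\ t (smul s u) x = t s (t u x)) /\
  (forall x, exists e, idem e /\ Xd e x).

Definition Lambda : set X :=
  [set x | forall s : S, Xd (sstar s) x -> t s x = x ->
           exists e : S, idem e /\ Xd (sstar e) x /\ sleq e s].

Definition top_principal : Prop := closure Lambda = setT.

End PartialAction.

(* Main.v *)
Require Import Defs.
From HB Require Import structures.
From mathcomp Require Import all_boot.
From mathcomp Require Import boolp classical_sets topology.
Local Open Scope classical_set_scope.
Set Implicit Arguments.
Unset Strict Implicit.

Section ISG.
Variable S : isg.
Local Notation m := (@smul S).
Local Notation st := (@sstar S).
Hypothesis HS : is_inverse_semigroup S.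
Let mA : forall a b c : S, m a (m b c) = m (m a b) c. Proof. by case: HS. Qed.
Let r1 : forall s : S, m (m s (st s)) s = s. Proof. by case: HS => _ []. Qed.
Let r2 : forall s : S, m (m (st s) s) (st s) = st s. Proof. by case: HS => _ [] _ []. Qed.
Let cm : forall e f : S, idem e -> idem f -> m e f = m f e. Proof. by case: HS => _ [] _ []. Qed.

Lemma inv_uniq a x y : m (m a x) a = a -> m (m x a) x = x ->
  m (m a y) a = a -> m (m y a) y = y -> x = y.
Proof.
move=> axa xax aya yay.
have ixa : idem (m x a) by rewrite /idem mA xax.
have iya : idem (m y a) by rewrite /idem mA yay.
have iax : idem (m a x) by rewrite /idem mA axa.
have iay : idem (m a y) by rewrite /idem mA aya.
transitivity (m (m y a) x).
  rewrite -{1}xax -{1}aya.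
  have -> : m (m x (m (m a y) a)) x = m (m (m x a) (m y a)) x by rewrite !mA.
  by rewrite (cm ixa iya) -mA xax.
rewrite -mA; symmetry.
  rewrite -{1}yay -{1}axa.
  have -> : m (m y (m (m a x) a)) y = m y (m (m a x) (m a y)) by rewrite !mA.
  by rewrite (cm iax iay) mA (mA y a y) yay.
Qed.

Lemma stK a : st (st a) = a.
Proof. by apply: (@inv_uniq (st a)); rewrite ?r1 ?r2. Qed.

Lemma idem_l a : idem (m (st a) a).
Proof. by rewrite /idem mA r2. Qed.
Lemma idem_r a : idem (m a (st a)).
Proof. by rewrite /idem mA r1. Qed.

Lemma stM a b : st (m a b) = m (st b) (st a).
Proof.
apply: (@inv_uniq (m a b)); rewrite ?r1 ?r2 //.
- have -> : m (m (m a b) (m (st b) (st a))) (m a b)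
     = m (m a (m (m b (st b)) (m (st a) a))) b by rewrite !mA.
  by rewrite (cm (idem_r b) (idem_l a)) !mA r1 -(mA a b (st b)) -(mA a (m b (st b)) b) r1.
- have -> : m (m (m (st b) (st a)) (m a b)) (m (st b) (st a))
     = m (m (st b) (m (m (st a) a) (m b (st b)))) (st a) by rewrite !mA.
  by rewrite (cm (idem_l a) (idem_r b)) !mA r2 -(mA (st b) (st a) a) -(mA (st b) (m (st a) a) (st a)) r2.
Qed.

Lemma idem_st e : idem e -> st e = e.
Proof.
move=> ie; apply: (@inv_uniq e); rewrite ?r1 ?r2 //; by rewrite ie ie.
Qed.

Lemma idem_mul e f : idem e -> idem f -> idem (m e f).
Proof.
move=> ie iff; rewrite /idem.
have -> : m (m e f) (m e f) = m e (m (m f e) f) by rewrite !mA.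
by rewrite -(cm ie iff) -(mA e f f) iff mA ie.
Qed.

Lemma idem_conj s e : idem e -> idem (m (m (st s) e) s).
Proof.
move=> ie; rewrite /idem.
have -> : m (m (m (st s) e) s) (m (m (st s) e) s)
   = m (m (st s) (m e (m s (st s)))) (m e s) by rewrite !mA.
by rewrite (cm ie (idem_r s)) !mA r2 -(mA (st s) e e) ie.
Qed.


Definition R (s t : S) := exists e, idem e /\ m s e = m t e.

Lemma sleq_se s e : idem e -> sleq (m s e) s.
Proof.
move=> ie; rewrite /sleq stM (idem_st ie).
have -> : m (m e (st s)) (m s e) = m (m e (m (st s) s)) e by rewrite !mA.
rewrite (cm ie (idem_l s)) -(mA (m (st s) s) e e) ie.
by rewrite !mA r1.
Qed.

Lemma ssimE s t : ssim s t <-> R s t.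
Proof.
split.
- case=> u [us ut]; exists (m (st u) u); split; first exact: idem_l.
  by rewrite -us -ut.
- case=> e [ie E]; exists (m s e); split; first exact: sleq_se.
  by rewrite E; apply: sleq_se.
Qed.

Lemma R_refl s : R s s.
Proof. by exists (m (st s) s); split; first exact: idem_l. Qed.

Lemma R_sym s t : R s t -> R t s.
Proof. by case=> e [ie E]; exists e. Qed.

Lemma R_trans s t w : R s t -> R t w -> R s w.
Proof.
case=> e [ie E] [f [iff F]]; exists (m e f); split; first exact: idem_mul.
by rewrite mA E -mA (cm ie iff) mA F -mA.
Qed.

Lemma conj_aux s w e : idem e -> m (m s w) (m (m (st w) e) w) = m (m s e) w.
Proof.
move=> ie.
have -> : m (m s w) (m (m (st w) e) w) = m (m s (m (m w (st w)) e)) w by rewrite !mA.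
rewrite (cm (idem_r w) ie) !mA -(mA (m s e) w (st w)).
by rewrite -(mA (m s e) (m w (st w)) w) r1.
Qed.

Lemma R_mulr s t w : R s t -> R (m s w) (m t w).
Proof.
case=> e [ie E]; exists (m (m (st w) e) w); split; first exact: idem_conj.
by rewrite !conj_aux // E.
Qed.

Lemma R_mull s t w : R s t -> R (m w s) (m w t).
Proof. by case=> e [ie E]; exists e; split => //; rewrite -!mA E. Qed.

Lemma R_st s t : R s t -> R (st s) (st t).
Proof.
case=> e [ie E]; exists (m (m s e) (st s)); split.
  by have := idem_conj (st s) ie; rewrite stK.
have E2 : m e (st s) = m e (st t) by rewrite -(idem_st ie) -!stM E.
have Hf : m (m s e) (st s) = m (m t e) (st t).
  have H1 : forall a, m (m a e) (st a) = m (m a e) (m e (st a)).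
    by move=> a; rewrite mA -(mA a e e) ie.
  by rewrite H1 E E2 -H1.
have L : forall a, m (st a) (m (m a e) (st a)) = m e (st a).
  move=> a; rewrite !mA (cm (idem_l a) ie).
  by rewrite -(mA e (m (st a) a) (st a)) r2.
by rewrite L Hf L E2.
Qed.

Lemma R_idem e f : idem e -> idem f -> R e f.
Proof.
move=> ie iff; exists (m e f); split; first exact: idem_mul.
by rewrite mA ie (cm ie iff) mA iff.
Qed.

Lemma R_se s e : idem e -> R (m s e) s.
Proof. by move=> ie; exists e; split => //; rewrite -mA ie. Qed.


Lemma cls_eq s t : cls s = cls t <-> R s t.
Proof.
split.
- move/(congr1 (@proj1_sig _ _)) => /= E; apply/ssimE; rewrite E.
  by apply/ssimE; exact: R_refl.
- move=> H; apply: eq_exist; apply: funext => u; apply: propext.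
  rewrite !ssimE; split => ?.
  + exact: R_trans (R_sym H) _.
  + exact: R_trans H _.
Qed.

Lemma cls_rep (A : GS_car S) : cls (rep A) = A.
Proof.
case: A => A HA; rewrite /rep /=.
case: ClassicalEpsilon.constructive_indefinite_description => s /= Es.
by apply: eq_exist; rewrite Es.
Qed.

Lemma rep_cls s : R (rep (cls s)) s.
Proof. by apply/cls_eq; rewrite cls_rep. Qed.

Lemma GS_mul a b : smul (i:=GS S) (cls a) (cls b) = cls (m a b).
Proof.
apply/cls_eq => /=.
exact: R_trans (R_mulr (rep (cls b)) (rep_cls a)) (R_mull a (rep_cls b)).
Qed.

Lemma GS_st a : sstar (i:=GS S) (cls a) = cls (st a).
Proof. by apply/cls_eq; exact: R_st (rep_cls a). Qed.

Lemma cls_surj (g : GS S) : exists a, g = cls a.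
Proof. by exists (rep g); rewrite cls_rep. Qed.

End ISG.

Theorem proposition7p10 (S : isg) (X : topologicalType)
  (th : partial_action S X) (tht : partial_action (GS S) X) :
  is_inverse_semigroup S ->
  E_unitary S ->
  is_top_partial_action th ->
  is_top_partial_action tht ->
  (forall g : GS S, pdom tht g = [set x | exists s : S, cls s = g /\ pdom th s x]) ->
  (forall (s : S) (x : X), pdom th (sstar s) x -> pact tht (cls s) x = pact th s x) ->
  (top_principal th <-> top_principal tht).
Proof.
move=> HS EU _ _ Hdom Hact.
have mA : forall a b c : S, smul a (smul b c) = smul (smul a b) c by case: HS.
have r1 : forall s : S, smul (smul s (sstar s)) s = s by case: HS => _ [].
suff E : Lambda th = Lambda tht by rewrite /top_principal E.
apply/seteqP; split => x.
- move=> Hx g; have [a ->] := cls_surj g => Hd0 Hfix.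
  have Hd := Hd0; rewrite (GS_st HS) Hdom in Hd.
  case: Hd => s [Es Hs].
  have Ra : cls (sstar s) = cls a.
    apply/(cls_eq HS); have := R_st HS (proj1 (cls_eq HS _ _) Es).
    by rewrite (stK HS).
  have Hs' : pdom th (sstar (sstar s)) x by rewrite (stK HS).
  have fx : pact th (sstar s) x = x by rewrite -Hact // Ra.
  case: (Hx _ Hs' fx) => e [ie [_ le]].
  have ist := EU _ _ ie le.
  exists (cls a); split; [|split] => //.
  + by rewrite /idem -Ra (GS_mul HS) ist.
  + by rewrite /sleq (GS_st HS) !(GS_mul HS) mA r1.
- move=> Hx s Hs fx.
  have Hd : pdom tht (sstar (i:=GS S) (cls s)) x.
    by rewrite (GS_st HS) Hdom; exists (sstar s).
  have fx' : pact tht (cls s) x = x by rewrite Hact.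
  case: (Hx _ Hd fx') => g [ig [_ le]].
  have [a Ea] := cls_surj g; subst g.
  move: ig; rewrite /idem (GS_mul HS) => /(cls_eq HS) Raa.
  move: le; rewrite /sleq (GS_st HS) !(GS_mul HS) => /(cls_eq HS) Ras.
  have h1 : R (smul (smul (sstar a) a) a) a.
    by have := R_mulr HS a (R_idem HS (idem_l HS a) (idem_r HS a)); rewrite r1.
  have h2 : R (smul (smul (sstar a) a) a) (smul (sstar a) a).
    by rewrite -mA; exact: (R_mull HS (sstar a) Raa).
  have Ra1 := R_trans HS (R_sym h1) h2.
  have h3 := R_sym (R_se HS s (idem_l HS a)).
  have Rs := R_trans HS h3 (R_trans HS (R_sym Ras) Ra1).
  case: Rs => f [iff Ef].
  have iu : idem (smul s f) by rewrite Ef; exact: (idem_mul HS (idem_l HS a) iff).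
  have is_s := EU _ _ iu (sleq_se HS s iff).
  exists s; split => //; split => //.
  by rewrite /sleq mA r1.
Qed.
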